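(* Let $k,n,m$ be positive integers with $n+m\le k$ and let $q$ be a prime power. Let $\mathbb{T}$ be the set of $1$-dimensional subspaces of $\mathbb{F}_q^k$ and define $\mathbb{X}=\{\{T_1,\dots,T_n\}\subseteq\mathbb{T}: \dim(T_1+\cdots+T_n)=n\}$, $\mathbb{Y}=\{\{T_1,\dots,T_m\}\subseteq\mathbb{T}: \dim(T_1+\cdots+T_m)=m\}$, $\mathbb{Z}=\{\{T_1,\dots,T_{n+m}\}\subseteq\mathbb{T}: \dim(T_1+\cdots+T_{n+m})=n+m\}$. Let $B$ be the bipartite graph with left (user) vertex set $\mathbb{X}$, right (subfile) vertex set $\mathbb{Y}$, and $X\in\mathbb{X}$ adjacent to $Y\in\mathbb{Y}$ if and only if $X\cup Y\in\mathbb{Z}$. Then $B$ is a $(K,F,D)$ bipartite caching graph admitting an induced matching cover with $$S=\frac{1}{(n+m)!}\,q^{\frac{(n+m)(n+m-1)}{2}}\prod_{i=0}^{n+m-1}\binom{k-i}{1}_q$$ induced matchings, each having $g=\binom{n+m}{n}$ edges, and it defines a coded caching scheme (for $N\ge K$ files) with $$K=\frac{1}{n!}q^{\frac{n(n-1)}{2}}\prod_{i=0}^{n-1}\binom{k-i}{1}_q,\qquad F=\frac{1}{m!}q^{\frac{m(m-1)}{2}}\prod_{i=0}^{m-1}\binom{k-i}{1}_q,$$ $$\frac{M}{N}=1-q^{nm}\prod_{i=0}^{m-1}\frac{\binom{k-n-i}{1}_q}{\binom{k-i}{1}_q},\qquad R=\frac{m!\,q^{nm}}{(n+m)!}\,q^{\frac{n(n-1)}{2}}\prod_{i=0}^{n-1}\binom{k-m-i}{1}_q,$$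 and global caching gain $\gamma=\binom{n+m}{n}$.
   Context: $\binom{a}{1}_q=\frac{q^a-1}{q-1}$ is the number of $1$-dimensional subspaces of $\mathbb{F}_q^a$; $\binom{n+m}{n}$ is an ordinary binomial coefficient. Coded caching setup: a server holds $N$ files $W_1,\dots,W_N$ and is connected by an error-free broadcast link to $K$ users, each having a cache able to store $M$ files; it is assumed throughout that $N\ge K$. Each file is split into $F$ equal-size subfiles $W_{i,f}$, $f\in\mathcal{F}$, $|\mathcal{F}|=F$ ($F$ is the subpacketization). Caching is done before demands are known and is symmetric: for every user $k$ and index $f$, user $k$ caches either $W_{i,f}$ for all $i$ or for no $i$. In the delivery phase every user demands one file and the server broadcasts transmissions, each of the size of one subfile, so that every user can recover its demanded file from its cache and the transmissions, for every demand vector. The rate is $R=(\text{number of transmissions})/F$ and the global caching gain is $\gamma=K(1-M/N)/R$. A $(K,F,D)$ bipartite caching graph is a bipartite graph with $K$ left (user) vertices and $F$ right (subfile) vertices in which every left vertex has degree $D$; it defines the symmetric caching scheme in which user $k$ does not cache the subfiles with index $f$ exactly when $\{k,f\}$ is an edge (so $M/N=1-D/F$). An induced matching of a bipartite graph $B$ is a set $\mathcal{C}\subseteq E(B)$ such that for any two distinct edges $\{k_1,f_1\},\{k_2,f_2\}\in\mathcal{C}$ we have $k_1\ne k_2$, $f_1\ne f_2$ and $\{k_1,f_2\},\{k_2,f_1\}\notin E(B)$. An induced matching cover of $B$ is a set of induced matchings partitioning $E(B)$; each induced matching $\{\{k_i,f_i\}\}_i$ gives the transmission $\sum_i W_{d_{k_i},f_i}$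 where $W_{d_k}$ is the file demanded by user $k$. *)

(* Defs.v *)
From HB Require Import structures.
From mathcomp Require Import all_boot all_order all_algebra all_field.
Set Implicit Arguments. Unset Strict Implicit. Unset Printing Implicit Defensive.
Import Order.TTheory GRing.Theory Num.Theory.

Section Bipartite.
Variables (Lt Rt : finType).
Variables (VL : {set Lt}) (VR : {set Rt}) (adj : Lt -> Rt -> bool).

Definition bip_edges : {set Lt * Rt} :=
  [set e | (e.1 \in VL) && (e.2 \in VR) && adj e.1 e.2].

Definition left_degree (x : Lt) : nat := #|[set y in VR | adj x y]|.

Definition caching_graph (K F D : nat) : Prop :=
  #|VL| = K /\ #|VR| = F /\ forall x, x \in VL -> left_degree x = D.

Definition induced_matching (C : {set Lt * Rt}) : Prop :=
  C \subset bip_edges /\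
  forall e1 e2, e1 \in C -> e2 \in C -> e1 != e2 ->
    [/\ e1.1 != e2.1, e1.2 != e2.2,
        (e1.1, e2.2) \notin bip_edges & (e2.1, e1.2) \notin bip_edges].

Definition induced_matching_cover (P : {set {set Lt * Rt}}) : Prop :=
  partition P bip_edges /\ forall C, C \in P -> induced_matching C.
End Bipartite.

(* A subspace of F^k is represented by the canonical square matrix <<A>>%MS
   whose row space it is. *)
Definition one_dim_subspaces (F : finFieldType) (k : nat) : {set 'M[F]_k} :=
  [set U : 'M[F]_k | (<<U>>%MS == U) && (\rank U == 1%N)].

Definition indep_lines (F : finFieldType) (k r : nat) : {set {set 'M[F]_k}} :=
  [set A : {set 'M[F]_k} | [&& A \subset one_dim_subspaces F k, #|A| == r &
                              \rank (\sum_(U in A) U)%MS == r]].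

Local Open Scope ring_scope.
Definition qint (q a : nat) : rat := ((q%:R ^+ a - 1) / (q%:R - 1)).

(* Main.v *)
Require Import Defs.
From HB Require Import structures.
From mathcomp Require Import all_boot all_order all_algebra all_field.
From mathcomp Require Import zify ring.
Import Order.TTheory GRing.Theory Num.Theory.
Set Implicit Arguments. Unset Strict Implicit. Unset Printing Implicit Defensive.

Section Lines.
Variables (F : finFieldType) (k : nat).
Local Notation L := (one_dim_subspaces F k).
Local Notation q := #|F|.

Lemma q_gt1 : (1 < q)%N.
Proof.
have h : #|[set (0%R:F); 1%R]| = 2%N by rewrite cards2 eq_sym oner_neq0.
rewrite -cardsT -h; apply: subset_leq_card; exact: subsetT.
Qed.

Lemma card_sub_vecs (W : 'M[F]_k) :
  #|[set v : 'rV[F]_k | (v <= W)%MS]| = (q ^ \rank W)%N.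
Proof.
have -> : [set v : 'rV[F]_k | (v <= W)%MS] =
   (fun x : 'rV[F]_(\rank W) => (x *m row_base W)%R) @: setT.
  apply/setP => v; rewrite inE; apply/idP/imsetP.
    rewrite -(eq_row_base W) => /submxP [x ->]; by exists x.
  by case=> x _ ->; rewrite (submx_trans (submxMl _ _)) // eq_row_base.
rewrite card_imset; last exact: row_free_inj (row_base_free W).
by rewrite cardsT card_mx mul1n.
Qed.

Definition nzv (W : 'M[F]_k) := [set v : 'rV[F]_k | (v <= W)%MS & v != 0%R].

Lemma card_nzv W : (#|nzv W| + 1 = q ^ \rank W)%N.
Proof.
rewrite -card_sub_vecs.
have -> : [set v : 'rV[F]_k | (v <= W)%MS] = 0%R |: nzv W.
  apply/setP => v; rewrite !inE; case: eqP => [->|] //=; rewrite ?sub0mx ?andbT //.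
by rewrite cardsU1 !inE eqxx andbF addnC.
Qed.

Lemma line_of (v : 'rV[F]_k) : v != 0%R -> <<v>>%MS \in L.
Proof. by move=> nz; rewrite inE genmx_id eqxx /= genmxE rank_rV nz. Qed.

Lemma line_eq (U : 'M[F]_k) (v : 'rV[F]_k) :
  U \in L -> v != 0%R -> (v <= U)%MS -> <<v>>%MS = U.
Proof.
rewrite inE => /andP [/eqP gU rU] nz sv.
rewrite -gU; apply: eq_genmx; apply/eqmxP.
have [_ <-] := mxrank_leqif_eq sv.
by rewrite rank_rV nz (eqP rU).
Qed.

Lemma line_rank (U : 'M[F]_k) : U \in L -> \rank U = 1%N.
Proof. by rewrite inE => /andP [_ /eqP]. Qed.

Lemma count_lines (W : 'M[F]_k) :
  (#|[set U in L | (U <= W)%MS]| * q.-1 + 1 = q ^ \rank W)%N.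
Proof.
rewrite -card_nzv; congr (_ + _)%N.
apply/esym; rewrite -sum1_card (partition_big (fun v => <<v>>%MS) (fun U => U \in [set U in L | (U <= W)%MS])).
  rewrite -sum_nat_const; apply: eq_bigr => U; rewrite inE => /andP [UL sUW].
  have := card_nzv U; rewrite (line_rank UL) expn1 => h.
  have -> : q.-1 = #|nzv U| by rewrite -h addn1.
  rewrite -sum1_card; apply: eq_bigl => v; rewrite !inE.
  apply/idP/idP.
    case/andP => /andP [_ nz] /eqP <-; by rewrite genmxE submx_refl nz.
  case/andP => sv nz; rewrite nz (line_eq UL nz sv) eqxx (submx_trans sv sUW).
  by [].
move=> v; rewrite inE => /andP [sv nz]; by rewrite inE line_of // genmxE sv.
Qed.

Lemma count_out (W : 'M[F]_k) :
  (#|[set U in L | ~~ (U <= W)%MS]| * q.-1 = q ^ k - q ^ \rank W)%N.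
Proof.
have h1 := count_lines W.
have h2 := count_lines (1%:M)%R.
rewrite mxrank1 in h2.
have e : [set U in L | (U <= (1%:M)%R)%MS] = L.
  by apply/setP => U; rewrite !inE submx1 andbT.
rewrite e in h2.
have hc : #|L| = (#|[set U in L | (U <= W)%MS]| + #|[set U in L | ~~ (U <= W)%MS]|)%N.
  rewrite -(cardsID [set U | (U <= W)%MS] L); congr (_ + _)%N; apply: eq_card => U;
  by rewrite !inE andbC.
by rewrite -h1 -h2 hc mulnDl addnAC addKn.
Qed.

Lemma rank_sum_le (A : {set 'M[F]_k}) : A \subset L ->
  (\rank (\sum_(U in A) U)%MS <= #|A|)%N.
Proof.
move=> sAL.
have h : (\rank (\sum_(U in A) U)%MS <= \sum_(U in A) \rank U)%N.
  apply: (big_ind2 (fun (M : 'M[F]_k) n => \rank M <= n)%N).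
  - by rewrite mxrank0.
  - move=> x1 x2 y1 y2 h1 h2; apply: leq_trans (mxrank_adds_leqif _ _) _.
    exact: leq_add.
  - by [].
apply: leq_trans h _; rewrite -sum1_card; apply: leq_sum => U UA.
by rewrite line_rank // (subsetP sAL).
Qed.

Definition SS (V : 'M[F]_k) (A : {set 'M[F]_k}) := (V + \sum_(U in A) U)%MS.

Lemma SS_mem V (A : {set 'M[F]_k}) (U : 'M[F]_k) : U \in A -> (U <= SS V A)%MS.
Proof.
move=> UA; apply: submx_trans (addsmxSr V _).
exact: (sumsmx_sup U).
Qed.

Lemma SS_U1 V (A : {set 'M[F]_k}) (U : 'M[F]_k) : U \notin A -> SS V (U |: A) = (SS V A + U)%MS.
Proof. by move=> nUA; rewrite /SS big_setU1 //= (addsmxC U) addsmxA. Qed.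

Lemma rank_add_out (W U : 'M[F]_k) : U \in L -> ~~ (U <= W)%MS ->
  \rank (W + U)%MS = (\rank W + 1)%N.
Proof.
move=> UL nUW; have := mxrank_sum_cap W U; rewrite (line_rank UL).
suff -> : \rank (W :&: U)%MS = 0%N by rewrite addn0 => ->.
have : (\rank (W :&: U)%MS <= 1)%N by rewrite -(line_rank UL) mxrankS // capmxSr.
rewrite leq_eqVlt ltnS leqn0 => /orP [/eqP h|/eqP //].
have [_] := mxrank_leqif_eq (capmxSr W U); rewrite h line_rank // eqxx => /esym e.
by case/negP: nUW; apply: submx_trans (capmxSl W U); case/andP: e.
Qed.

Lemma rank_add_le (W U : 'M[F]_k) : U \in L ->
  (\rank (W + U)%MS <= \rank W + 1)%N.
Proof. by move=> UL; rewrite -(line_rank UL) mxrank_adds_leqif. Qed.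

Lemma rank_add_in (W U : 'M[F]_k) : (U <= W)%MS -> \rank (W + U)%MS = \rank W.
Proof. by move/addsmx_idPl => ->. Qed.

Definition Gs (V : 'M[F]_k) r := [set A : {set 'M[F]_k} |
  [&& A \subset L, #|A| == r & \rank (SS V A) == (\rank V + r)%N]].

Lemma Gs_step V r (U : 'M[F]_k) : U \in L ->
  [set A in Gs V r.+1 | U \in A] =
  (fun A => U |: A) @: [set A in Gs V r | ~~ (U <= SS V A)%MS].
Proof.
move=> UL; apply/setP => A'; rewrite !inE; apply/idP/imsetP.
  case/andP => /and3P [sAL /eqP cA /eqP rA] UA.
  exists (A' :\ U); last by rewrite setD1K.
  have nUA : U \notin A' :\ U by rewrite !inE eqxx.
  have cA1 : #|A' :\ U| = r by move: cA; rewrite (cardsD1 U) UA add1n => -[].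
  have sA1 : A' :\ U \subset L by apply: subset_trans sAL; apply: subsetDl.
  move: rA; rewrite -{1}(setD1K UA) SS_U1 // => rA.
  have h1 := rank_add_le (SS V (A' :\ U)) UL.
  have h2 : (\rank (SS V (A' :\ U)) <= \rank V + r)%N.
    apply: leq_trans (mxrank_adds_leqif _ _) _; rewrite leq_add2l -cA1.
    exact: rank_sum_le.
  have e : \rank (SS V (A' :\ U)) = (\rank V + r)%N.
    apply/eqP; rewrite eqn_leq h2 /= -(leq_add2r 1) -addnA addn1 -rA; exact: h1.
  rewrite !inE sA1 cA1 e !eqxx /=.
  apply/negP => sU; move: rA; rewrite rank_add_in // e; lia.
case=> A; rewrite !inE => /andP [/and3P [sAL /eqP cA /eqP rA] nU] ->.
have nUA : U \notin A by apply: contra nU; apply: SS_mem.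
rewrite setU11 andbT subUset sub1set UL sAL cardsU1 nUA cA /=.
by rewrite SS_U1 // rank_add_out // rA add1n -addnA addn1 !eqxx.
Qed.

Lemma Gs_count V r :
  (#|Gs V r| * r`! * q.-1 ^ r = \prod_(i < r) (q ^ k - q ^ (\rank V + i)))%N.
Proof.
elim: r => [|r IH].
  rewrite big_ord0 fact0 expn0 !muln1.
  have -> : Gs V 0 = [set set0].
    apply/setP => A; rewrite !inE; apply/idP/idP.
      by case/and3P => _ /eqP /cards0_eq ->.
    by move/eqP ->; rewrite sub0set cards0 /SS big_set0 addsmx0 addn0 !eqxx.
  by rewrite cards1.
have dc : (#|Gs V r.+1| * r.+1 =
   \sum_(A in Gs V r) #|[set U in L | ~~ (U <= SS V A)%MS]|)%N.
  have -> : (#|Gs V r.+1| * r.+1 = \sum_(A in Gs V r.+1) \sum_(U | U \in A) 1)%N.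
    rewrite -sum_nat_const; apply: eq_bigr => A; rewrite inE => /and3P [_ /eqP c _].
    by rewrite sum1_card c.
  rewrite (exchange_big_dep (fun U => U \in L)) /=; last first.
    by move=> A U; rewrite inE => /and3P [sAL _ _] UA; rewrite (subsetP sAL).
  have -> : (\sum_(A in Gs V r) #|[set U in L | ~~ (U <= SS V A)%MS]| =
     \sum_(A in Gs V r) \sum_(U | (U \in L) && ~~ (U <= SS V A)%MS) 1)%N.
    by apply: eq_bigr => A _; rewrite -sum1_card; apply: eq_bigl => U; rewrite inE.
  rewrite (exchange_big_dep (fun U => U \in L)) /=; last by move=> A U _ /andP [].
  apply: eq_bigr => U UL.
  transitivity #|[set A in Gs V r.+1 | U \in A]|.
    by rewrite -sum1_card; apply: eq_bigl => A; rewrite inE.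
  rewrite Gs_step // card_in_imset.
    rewrite -sum1_card; apply: eq_bigl => A; move: UL; rewrite !inE => ->.
    by [].
  move=> A1 A2; rewrite !inE => /andP [_ n1] /andP [_ n2] e.
  have nU1 : U \notin A1 by apply: contra n1; apply: SS_mem.
  have nU2 : U \notin A2 by apply: contra n2; apply: SS_mem.
  by rewrite -(setU1K nU1) e setU1K.
have eq1 : ((\sum_(A in Gs V r) #|[set U in L | ~~ (U <= SS V A)%MS]|) * q.-1 =
           #|Gs V r| * (q ^ k - q ^ (\rank V + r)))%N.
  rewrite bigop.big_distrl /= -sum_nat_const; apply: eq_bigr => A.
  by rewrite inE => /and3P [_ _ /eqP rr]; rewrite count_out rr.
rewrite big_ord_recr /= -IH factS expnS.
have -> : (#|Gs V r.+1| * (r.+1 * r`!) * (q.-1 * q.-1 ^ r) =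
   (#|Gs V r.+1| * r.+1) * q.-1 * (r`! * q.-1 ^ r))%N by ring.
rewrite dc eq1; ring.
Qed.

Lemma indep_Gs r : indep_lines F k r = Gs 0 r.
Proof. by apply/setP => A; rewrite !inE /SS adds0mx mxrank0 add0n. Qed.

Lemma rank_union_sum (x y : {set 'M[F]_k}) :
  \rank (\sum_(U in x :|: y) U)%MS = \rank (SS (\sum_(U in x) U)%MS y).
Proof.
apply: eqmx_rank; apply/andP; split.
  apply/sumsmx_subP => U; rewrite inE => /orP [Ux|Uy]; last exact: SS_mem.
  apply: submx_trans (addsmxSl _ _); exact: (sumsmx_sup U).
rewrite addsmx_sub; apply/andP; split; apply/sumsmx_subP => U UA;
  by apply: (sumsmx_sup U) => //; rewrite inE UA ?orbT.
Qed.

Lemma setUDK (x W : {set 'M[F]_k}) : x \subset W -> x :|: (W :\: x) = W.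
Proof.
move=> sxW; apply/setP => u; rewrite !inE.
by case ux: (u \in x) => //=; rewrite (subsetP sxW).
Qed.

Lemma setDDK (x W : {set 'M[F]_k}) : x \subset W -> W :\: (W :\: x) = x.
Proof.
move=> sxW; apply/setP => u; rewrite !inE.
by case ux: (u \in x); case uW: (u \in W) => //; move: (subsetP sxW u); rewrite ux uW; move=> h; have := h isT.
Qed.

Lemma card_setD (x W : {set 'M[F]_k}) : x \subset W -> (#|x| + #|W :\: x| = #|W|)%N.
Proof. by move=> sxW; rewrite -(cardsID x W) (setIidPr sxW). Qed.

Lemma rank_le_SS (V : 'M[F]_k) (y : {set 'M[F]_k}) : y \subset L ->
  (\rank (SS V y) <= \rank V + #|y|)%N.
Proof.
move=> syL; apply: leq_trans (mxrank_adds_leqif _ _) _.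
by rewrite leq_add2l rank_sum_le.
Qed.

Lemma indep_sub r (W x : {set 'M[F]_k}) : W \in indep_lines F k r -> x \subset W ->
  x \in indep_lines F k #|x|.
Proof.
rewrite !inE => /and3P [sWL /eqP cW /eqP rW] sxW.
have sxL : x \subset L := subset_trans sxW sWL.
rewrite sxL eqxx /=.
have sdL : W :\: x \subset L by apply: subset_trans sWL; apply: subsetDl.
have h1 := rank_le_SS (\sum_(U in x) U)%MS sdL.
have h2 := rank_sum_le sxL.
have h3 := card_setD sxW.
move: h1; rewrite -rank_union_sum setUDK // rW -cW -h3 => h1.
apply/eqP; apply/eqP; rewrite eqn_leq h2 /=.
by rewrite -(leq_add2r #|W :\: x|).
Qed.
End Lines.

Section Graph.
Variables (F : finFieldType) (k n m : nat).
Local Notation L := (one_dim_subspaces F k).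
Local Notation X := (indep_lines F k n).
Local Notation Y := (indep_lines F k m).
Local Notation Z := (indep_lines F k (n + m)).
Local Notation MM := {set 'M[F]_k}.
Definition adjZ := fun (x y : MM) => (x :|: y) \in Z.

Lemma edgeP (e : MM * MM) :
  (e \in bip_edges X Y adjZ) = [&& e.1 \in X, e.2 \in Y & (e.1 :|: e.2) \in Z].
Proof. by rewrite inE -andbA. Qed.

Lemma degree_set (x : MM) : x \in X ->
  [set y in Y | adjZ x y] = Gs (\sum_(U in x) U)%MS m.
Proof.
move=> xX; have := xX; rewrite inE => /and3P [sxL /eqP cx /eqP rx].
apply/setP => y; rewrite /adjZ !inE; apply/idP/idP.
  case/andP => /and3P [syL /eqP cy /eqP ry] /and3P [_ _ /eqP rU].
  by rewrite syL cy rx -rank_union_sum rU !eqxx.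
case/and3P => syL /eqP cy /eqP rS.
have h1 := rank_le_SS (\sum_(U in x) U)%MS syL.
have h2 : (\rank (SS (\sum_(U in x) U)%MS y) <= n + \rank (\sum_(U in y) U)%MS)%N.
  by rewrite -rx; apply: mxrank_adds_leqif.
have h3 := rank_sum_le syL.
have ry : \rank (\sum_(U in y) U)%MS = m.
  apply/eqP; rewrite eqn_leq -{1}cy h3 /= -(leq_add2l n) -{1}rx -rS; exact: h2.
rewrite syL cy ry !eqxx /= subUset sxL syL /= rank_union_sum rS rx.
have h4 := rank_sum_le (_ : x :|: y \subset L).
rewrite eqxx andbT.
have h5 : (#|x :|: y| <= n + m)%N by rewrite -cx -cy -cardsUI leq_addr.
have h6 : (n + m <= #|x :|: y|)%N.
  rewrite -rx -rS -rank_union_sum; apply: rank_sum_le; by rewrite subUset sxL syL.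
by rewrite eqn_leq h5 h6.
Qed.

Definition Mt (W : MM) : {set MM * MM} :=
  [set e : MM * MM | [&& e.1 \subset W, #|e.1| == n & e.2 == W :\: e.1]].

Lemma MtP W (e : MM * MM) : (e \in Mt W) = [&& e.1 \subset W, #|e.1| == n & e.2 == W :\: e.1].
Proof. by rewrite inE. Qed.

Lemma Mt_union W e : e \in Mt W -> W = e.1 :|: e.2.
Proof. by rewrite inE => /and3P [s _ /eqP ->]; rewrite setUDK. Qed.

Lemma card_Mt W : W \in Z -> #|Mt W| = 'C(n + m, n).
Proof.
rewrite inE => /and3P [_ /eqP cW _].
have -> : Mt W = (fun x => (x, W :\: x)) @: [set x : MM | x \subset W & #|x| == n].
  apply/setP => e; rewrite inE; apply/idP/imsetP.
    case: e => x y /= /and3P [s c /eqP ->]; exists x => //; by rewrite inE s c.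
  by case=> x; rewrite inE => /andP [s c] ->; rewrite /= s c eqxx.
rewrite card_imset; first by rewrite cards_draws cW.
by move=> x1 x2 [].
Qed.

Lemma Mt_edges W : W \in Z -> Mt W \subset bip_edges X Y adjZ.
Proof.
move=> WZ; apply/subsetP => e eM; rewrite edgeP -(Mt_union eM) WZ andbT.
move: eM; rewrite inE => /and3P [s /eqP c /eqP e2].
have := WZ; rewrite inE => /and3P [_ /eqP cW _].
have h := card_setD s.
apply/andP; split.
  by rewrite -c; apply: (indep_sub WZ).
have -> : m = #|e.2| by rewrite e2; move: h; rewrite c cW; lia.
by apply: (indep_sub WZ); rewrite e2 subsetDl.
Qed.

Lemma no_cross W (x1 x2 : MM) : W \in Z -> x1 \subset W -> x2 \subset W ->
  #|x1| = n -> #|x2| = n -> x1 != x2 ->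
  (x1, W :\: x2) \notin bip_edges X Y adjZ.
Proof.
move=> WZ s1 s2 c1 c2 ne; apply/negP; rewrite edgeP => /and3P [_ _ /=].
have := WZ; rewrite !inE => /and3P [_ /eqP cW _] /and3P [_ /eqP cU _].
have h := card_setD s2.
have hI := cardsUI x1 (W :\: x2).
have e0 : #|x1 :&: (W :\: x2)| = 0%N by lia.
have s12 : x1 \subset x2.
  apply/subsetP => u u1; apply/negPn/negP => nu2.
  have : u \in x1 :&: (W :\: x2) by rewrite !inE u1 nu2 (subsetP s1).
  by rewrite (cards0_eq e0) inE.
case/negP: ne; rewrite eqEcard s12 c1 c2 leqnn //.
Qed.

Lemma Mt_induced W : W \in Z -> induced_matching X Y adjZ (Mt W).
Proof.
move=> WZ; split; first exact: Mt_edges.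
move=> [x1 y1] [x2 y2]; rewrite !MtP /= => /and3P [s1 /eqP c1 /eqP ->]
  /and3P [s2 /eqP c2 /eqP ->] ne.
have nx : x1 != x2 by apply: contraNneq ne => ->.
split => //=.
- apply: contra nx => /eqP e; by rewrite -(setDDK s1) e setDDK.
- exact: no_cross.
- by apply: no_cross; rewrite // eq_sym.
Qed.

Lemma edge_in_Mt (e : MM * MM) : e \in bip_edges X Y adjZ -> e \in Mt (e.1 :|: e.2).
Proof.
rewrite edgeP => /and3P [xX yY WZ].
move: xX yY WZ; rewrite !inE => /and3P [_ /eqP c1 _] /and3P [_ /eqP c2 _]
  /and3P [_ /eqP cW _].
have hI := cardsUI e.1 e.2.
have e0 : #|e.1 :&: e.2| = 0%N by lia.
rewrite subsetUl c1 eqxx /=; apply/eqP/setP => u; rewrite !inE.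
case u2: (u \in e.2); case u1: (u \in e.1) => //=.
have : u \in e.1 :&: e.2 by rewrite inE u1 u2.
by rewrite (cards0_eq e0) inE.
Qed.

Definition PP := Mt @: Z.

Lemma PP_cover : induced_matching_cover X Y adjZ PP.
Proof.
split; last by move=> C /imsetP [W WZ ->]; exact: Mt_induced.
apply/and3P; split.
- rewrite eqEsubset; apply/andP; split.
    apply/subsetP => e /bigcupP [C /imsetP [W WZ ->]] eM.
    exact: (subsetP (Mt_edges WZ)).
  apply/subsetP => e eE; apply/bigcupP; exists (Mt (e.1 :|: e.2)).
    apply/imsetP; exists (e.1 :|: e.2) => //; by move: eE; rewrite edgeP => /and3P [].
  exact: edge_in_Mt.
- apply/trivIsetP => C1 C2 /imsetP [W1 _ ->] /imsetP [W2 _ ->] ne.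
  rewrite -setI_eq0; apply/eqP/setP => e; rewrite inE [e \in set0]inE.
  apply/negP => /andP [e1 e2]; case/negP: ne.
  by rewrite (Mt_union e1) (Mt_union e2).
- apply/imsetP => -[W WZ e0].
  have := card_Mt WZ; rewrite -e0 cards0 => h0.
  by have := bin_gt0 (n + m) n; rewrite -h0 leq_addr.
Qed.

Lemma card_PP : #|PP| = #|Z|.
Proof.
apply: card_in_imset => W1 W2 W1Z W2Z e.
have : Mt W1 != set0 by rewrite -card_gt0 card_Mt // bin_gt0 leq_addr.
case/set0Pn => f fM.
have fM2 : f \in Mt W2 by rewrite -e.
by rewrite (Mt_union fM) (Mt_union fM2).
Qed.
End Graph.

Section Num.
Variables (F : finFieldType) (k : nat).
Local Notation q := #|F|.
Local Open Scope ring_scope.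
Local Notation Q := (q%:R : rat).

Lemma Q1_neq0 : Q - 1 != 0.
Proof. by rewrite subr_eq0 pnatr_eq1 neq_ltn (q_gt1 F) orbT. Qed.

Lemma Q_neq0 : Q != 0.
Proof. by rewrite pnatr_eq0 -lt0n ltnW // (q_gt1 F). Qed.

Lemma qint_neq0 a : (0 < a)%N -> qint q a != 0.
Proof.
move=> a0; rewrite /qint mulf_neq0 //; last by rewrite invr_eq0 Q1_neq0.
rewrite subr_eq0 -natrX pnatr_eq1.
by rewrite neq_ltn; apply/orP; right; rewrite -[X in (X < _)%N](expn0 q) ltn_exp2l ?(q_gt1 F).
Qed.

Lemma prod_neq0 (r : nat) (f : 'I_r -> rat) : (forall i, f i != 0) -> \prod_(i < r) f i != 0.
Proof.
move=> h; apply: (big_ind (fun x : rat => x != 0)).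
- exact: oner_neq0.
- by move=> x y; apply: mulf_neq0.
- by move=> i _; exact: h.
Qed.

Lemma sum_shift d r : (\sum_(i < r) (d + i) = d * r + 'C(r, 2))%N.
Proof.
elim: r => [|r IH]; first by rewrite big_ord0 muln0.
by rewrite big_ord_recr /= IH binS bin1 mulnS; lia.
Qed.

Lemma cnt_rat (V : 'M[F]_k) r : (\rank V + r <= k)%N ->
  (#|Gs V r|)%:R = ((r`!)%:R)^-1 * Q ^+ (\rank V * r + 'C(r, 2))
                    * \prod_(i < r) qint q (k - \rank V - i).
Proof.
move=> hr.
have h := congr1 (fun t => t%:R : rat) (Gs_count V r).
move: h; rewrite /= !natrM natrX natr_prod.
have e1 : (q.-1)%:R = Q - 1 by rewrite -subn1 natrB ?(ltnW (q_gt1 F)).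
rewrite e1.
rewrite (eq_bigr (fun i : 'I_r => Q ^+ (\rank V + i) * ((Q - 1) * qint q (k - \rank V - i)))); last first.
  move=> i _; rewrite natrB; last by rewrite leq_pexp2l ?(ltnW (q_gt1 F)) //; have := ltn_ord i; lia.
  rewrite !natrX /qint [(_ - 1) * _]mulrC divfK ?Q1_neq0 // mulrBr mulr1 -exprD.
  by congr (_ ^+ _ - _); have := ltn_ord i; lia.
rewrite big_split /= big_split /= prodrXr prodr_const card_ord sum_shift => h.
have fn : (r`!)%:R != 0 :> rat by rewrite pnatr_eq0 -lt0n fact_gt0.
set c := (#|Gs V r|)%:R in h *.
set E := Q ^+ _ in h *. set P := \prod_(i < r) _ in h *.
set w := (Q - 1) ^+ r in h.
have wn : w != 0 by rewrite expf_neq0 // Q1_neq0.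
clearbody c E P w.
have -> : c = c * (r`!)%:R * w / ((r`!)%:R * w) by field; rewrite ?wn ?fn.
by rewrite h; field; rewrite ?wn ?fn.
Qed.
End Num.

Lemma Gs_card_rank (F : finFieldType) k (V1 V2 : 'M[F]_k) r :
  \rank V1 = \rank V2 -> #|Gs V1 r| = #|Gs V2 r|.
Proof.
move=> e; have h1 := Gs_count V1 r; have h2 := Gs_count V2 r.
rewrite e -h2 -!mulnA in h1.
have pos : (0 < r`! * #|F|.-1 ^ r)%N.
  by rewrite muln_gt0 fact_gt0 expn_gt0 -subn1 subn_gt0 (q_gt1 F).
by apply/eqP; rewrite -(eqn_pmul2r pos) h1.
Qed.

Lemma C2 r : 'C(r, 2) = ((r * r.-1) %/ 2)%N.
Proof. by rewrite bin2 divn2. Qed.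

Lemma C2D a b : 'C(a + b, 2) = ('C(a, 2) + 'C(b, 2) + a * b)%N.
Proof.
elim: b => [|b IH]; first by rewrite !addn0 muln0 /= addn0.
rewrite addnS binS bin1 IH binS bin1 mulnS; lia.
Qed.

Lemma prod_split (q k a b : nat) :
  (\prod_(i < a + b) qint q (k - i) =
   \prod_(i < a) qint q (k - i) * \prod_(i < b) qint q (k - a - i))%R.
Proof.
rewrite big_split_ord /=; congr (_ * _)%R; apply: eq_bigr => i _.
by rewrite subnDA.
Qed.

Unset Implicit Arguments.
Local Open Scope ring_scope.
Theorem theorem3 (F : finFieldType) (k n m : nat) :
  (0 < k)%N -> (0 < n)%N -> (0 < m)%N -> (n + m <= k)%N ->
  let q := #|F| in
  let X := indep_lines F k n in
  let Y := indep_lines F k m in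
  let Z := indep_lines F k (n + m) in
  let adj := fun (x y : {set 'M[F]_k}) => (x :|: y) \in Z in
  exists K Fs D : nat,
    caching_graph X Y adj K Fs D /\
    K%:Q = (n`!)%:R^-1 * q%:R ^+ ((n * n.-1) %/ 2) * \prod_(i < n) qint q (k - i) /\
    Fs%:Q = (m`!)%:R^-1 * q%:R ^+ ((m * m.-1) %/ 2) * \prod_(i < m) qint q (k - i) /\
    exists P : {set {set {set 'M[F]_k} * {set 'M[F]_k}}},
      induced_matching_cover X Y adj P /\
      #|P|%:Q = ((n + m)`!)%:R^-1 * q%:R ^+ (((n + m) * (n + m).-1) %/ 2)
                  * \prod_(i < n + m) qint q (k - i) /\
      (forall C, C \in P -> #|C| = 'C(n + m, n)) /\
      let MN : rat := 1 - D%:R / Fs%:R in   (* M/N = 1 - D/F *)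
      let R : rat := #|P|%:R / Fs%:R in     (* rate = #transmissions / F *)
      MN = 1 - q%:R ^+ (n * m) * \prod_(i < m) (qint q (k - n - i) / qint q (k - i)) /\
      R = (m`!)%:R * q%:R ^+ (n * m) / ((n + m)`!)%:R * q%:R ^+ ((n * n.-1) %/ 2)
            * \prod_(i < n) qint q (k - m - i) /\
      K%:R * (1 - MN) / R = ('C(n + m, n))%:R.
Proof.
move=> hk hn hm hnm; cbv zeta.
have nk : (n <= k)%N by lia.
have mk : (m <= k)%N by lia.
set V0 : 'M[F]_k := pid_mx n.
have rV0 : \rank V0 = n by rewrite /V0 rank_pid_mx.
exists #|indep_lines F k n|, #|indep_lines F k m|, #|Gs V0 m|.
have hK : (#|indep_lines F k n|)%:R = (n`!)%:R^-1 * (#|F|%:R : rat) ^+ 'C(n, 2)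
            * \prod_(i < n) qint #|F| (k - i).
  rewrite indep_Gs cnt_rat mxrank0 ?add0n //.
  by congr (_ * _); apply: eq_bigr => i _; rewrite subn0.
have hF : (#|indep_lines F k m|)%:R = (m`!)%:R^-1 * (#|F|%:R : rat) ^+ 'C(m, 2)
            * \prod_(i < m) qint #|F| (k - i).
  rewrite indep_Gs cnt_rat mxrank0 ?add0n //.
  by congr (_ * _); apply: eq_bigr => i _; rewrite subn0.
have hS : (#|indep_lines F k (n + m)|)%:R = ((n + m)`!)%:R^-1 * (#|F|%:R : rat) ^+ 'C(n + m, 2)
            * \prod_(i < n + m) qint #|F| (k - i).
  rewrite indep_Gs cnt_rat mxrank0 ?add0n //.
  by congr (_ * _); apply: eq_bigr => i _; rewrite subn0.
have hD : (#|Gs V0 m|)%:R = (m`!)%:R^-1 * (#|F|%:R : rat) ^+ (n * m + 'C(m, 2))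
            * \prod_(i < m) qint #|F| (k - n - i).
  by rewrite cnt_rat rV0.
split.
  split; first by [].
  split; first by [].
  move=> x xX; rewrite /left_degree.
  have := @degree_set F k n m x xX; rewrite /adjZ => ->.
  apply: Gs_card_rank; rewrite rV0.
  by move: xX; rewrite inE => /and3P [_ _ /eqP].
split; first by rewrite -pmulrn hK C2.
split; first by rewrite -pmulrn hF C2.
exists (PP F k n m).
split; first exact: PP_cover.
have hP : (#|PP F k n m|)%:R = ((n + m)`!)%:R^-1 * (#|F|%:R : rat) ^+ 'C(n + m, 2)
            * \prod_(i < n + m) qint #|F| (k - i).
  by rewrite card_PP hS.
split; first by rewrite -pmulrn hP C2.
split.
  by move=> C /imsetP [W WZ ->]; rewrite (@card_Mt F k n m).
have epd : \prod_(i < m) (qint #|F| (k - n - i) / qint #|F| (k - i)) =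
   \prod_(i < m) qint #|F| (k - n - i) / \prod_(i < m) qint #|F| (k - i).
  by rewrite prodf_div.
rewrite hP hF hD hK epd {hP hF hD hS hK epd}.
have pnm1 := prod_split #|F| k n m.
have pnm2 : \prod_(i < n + m) qint #|F| (k - i) =
     \prod_(i < m) qint #|F| (k - i) * \prod_(i < n) qint #|F| (k - m - i).
  rewrite -prod_split; by rewrite addnC.
have qpos : forall a, (0 < a)%N -> qint #|F| a != 0 := @qint_neq0 F.
have pn0 : \prod_(i < n) qint #|F| (k - i) != 0.
  by apply: prod_neq0 => i; apply: qpos; have := ltn_ord i; lia.
have pm0 : \prod_(i < m) qint #|F| (k - i) != 0.
  by apply: prod_neq0 => i; apply: qpos; have := ltn_ord i; lia.
have pd0 : \prod_(i < m) qint #|F| (k - n - i) != 0.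
  by apply: prod_neq0 => i; apply: qpos; have := ltn_ord i; lia.
have pr0 : \prod_(i < n) qint #|F| (k - m - i) != 0.
  by apply: prod_neq0 => i; apply: qpos; have := ltn_ord i; lia.
have hbin : ('C(n + m, n))%:R = ((n + m)`!)%:R / ((n`!)%:R * (m`!)%:R) :> rat.
  have := bin_fact (leq_addr m n); rewrite addKn => e.
  by rewrite -e !natrM mulfK // mulf_neq0 // pnatr_eq0 -lt0n fact_gt0.
rewrite hbin pnm2 C2D !exprD -!C2.
have fn0 : (n`!)%:R != 0 :> rat by rewrite pnatr_eq0 -lt0n fact_gt0.
have fm0 : (m`!)%:R != 0 :> rat by rewrite pnatr_eq0 -lt0n fact_gt0.
have fnm0 : ((n + m)`!)%:R != 0 :> rat by rewrite pnatr_eq0 -lt0n fact_gt0.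
have qn0 : forall e, (#|F|%:R : rat) ^+ e != 0 by move=> e; rewrite expf_neq0 // Q_neq0.
move: pnm1; rewrite pnm2 => pnm1.
set pn := \prod_(i < n) _ in pn0 pnm1 *.
set pm := \prod_(i < m) qint _ (k - i) in pm0 pnm1 *.
set pd := \prod_(i < m) qint _ (k - n - i) in pd0 pnm1 *.
set pr := \prod_(i < n) qint _ (k - m - i) in pr0 pnm1 *.
have a0 := qn0 'C(n, 2).
have b0 := qn0 'C(m, 2).
have c0 := qn0 (n * m)%N.
set a := (#|F|%:R : rat) ^+ 'C(n, 2) in a0 *.
set b := (#|F|%:R : rat) ^+ 'C(m, 2) in b0 *.
set c := (#|F|%:R : rat) ^+ (n * m)%N in c0 *.
set fn := (n`!)%:R in fn0 *. set fm := (m`!)%:R in fm0 *.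
set fnm := ((n + m)`!)%:R in fnm0 *.
clearbody pn pm pd pr a b c fn fm fnm.
split; first by field; rewrite ?fm0 ?b0 ?pm0 ?fnm0 ?c0 ?a0 ?pr0 ?pd0 ?pn0 ?fn0.
split; first by field; rewrite ?fm0 ?b0 ?pm0 ?fnm0 ?c0 ?a0 ?pr0 ?pd0 ?pn0 ?fn0.
rewrite pnm1.
by field; rewrite ?fm0 ?b0 ?pm0 ?fnm0 ?c0 ?a0 ?pr0 ?pd0 ?pn0 ?fn0.
Qed.
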